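(* Let $N\ge3$, $G\in\mathcal G_3(N)$ and $u\in V(G)$. Then $u$ is not a leaf of $G$ if and only if $c(G|s)=\infty$ for every state $s=(x^1,\dots,x^{N-1},u,N)\in S^N\cap S_{nc}$ (robber on $u$, robber to move).
   Context: Board and moves: $G=(V,E)$ finite, simple, connected, undirected. There are $N\ge3$ tokens, cops $C_1,\dots,C_{N-1}$ (tokens $1,\dots,N-1$) and robber $R$ (token $N$). A state is $s=(x^1,\dots,x^N,n)$ with $x^i\in V$ the position of token $i$ and $n$ the token to move; $S^n$ is the set of states with token $n$ to move; $s$ is a capture state if $x^i=x^N$ for some $i\le N-1$, and $S_{nc}$ is the set of noncapture states. In each turn the token to move moves to a vertex of its closed neighbourhood (may stay put); order $C_1,\dots,C_{N-1},R,C_1,\dots$; the game ends at the first capture. The modified cops-and-robber (CR) game is the two-player zero-sum game where one player controls all cops, the other the robber, and if capture occurs at time $t$ (number of turns) the robber's payoff is $-\gamma^t$ ($0$ if never), $\gamma\in(0,1)$. $\widehat\Sigma^n$ denotes the set of pure positional strategies of token $n$ that are components of optimal strategies in this game (CR-optimal strategies). For $s\in S_{nc}$, whenever CR-optimal play from $s$ leads to capture, it is always the same cop, denoted $\widehat C(s)$, that effects it. State cop number. For $s\in S_{nc}$, $c(G|s)=c_N(G|s)$ is the minimum $k\in\{1,\dots,N-1\}$ for which there exist $k$ cops and strategies for them such that, starting from $s$, a capture (by any cop) occurs whatever the other $N-k$ tokens (including $R$) do; $c(G|s)=\infty$ if no such $k$ exists. $c(G)$ is the classical cop number of $G$. Graph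 classes. $\mathcal G(N)=\{G: c(G)>N-1\}$; $\mathcal G_1(N)=\{G\in\mathcal G(N):\exists s\in S_{nc}\text{ with } c(G|s)\in\{2,\dots,N-1\}\}$; $\mathcal G_1'(N)=\mathcal G(N)\setminus\mathcal G_1(N)$; $\mathcal G_2(N)=\{G\in\mathcal G(N): c(G|s)=\infty\text{ for all } s\in S^N\cap S_{nc}\}$; $\mathcal G_2'(N)=\mathcal G_1'(N)\setminus\mathcal G_2(N)$. Say that a state $s\in S_{nc}$ with $c(G|s)=1$ and $\widehat C(s)=C_m$ has the sure-capture property if for every $\widehat\sigma^m\in\widehat\Sigma^m$ and every strategy profile $\sigma^{-m}$ of the other tokens, play from $s$ under $(\widehat\sigma^m,\sigma^{-m})$ ends in a capture in which $C_m$ is on the robber's vertex. $\mathcal G_3(N)$ is the set of $G\in\mathcal G_2'(N)$ in which every $s\in S_{nc}$ with $c(G|s)=1$ has the sure-capture property. *)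

(* Defs.v *)
From Stdlib Require Import Reals ClassicalEpsilon.
From mathcomp Require Import all_boot.

Set Implicit Arguments.
Unset Strict Implicit.
Unset Printing Implicit Defensive.

Definition simple_connected_graph (T : finType) (e : rel T) : Prop :=
  symmetric e /\ irreflexive e /\ (forall x y : T, connect e x y).

Definition closed_nbhd (T : finType) (e : rel T) (x y : T) : bool :=
  (x == y) || e x y.

Definition leaf (T : finType) (e : rel T) (u : T) : bool :=
  #|[set v | e u v]| == 1.

(* Classical game with k cops: the cops choose initial vertices, then the    *)
(* robber chooses his; then alternately all cops move (each to its closed    *)
(* neighbourhood), then the robber moves. Cops win if some cop eventually   *)

Section Classical.
Variables (T : finType) (e : rel T).

(* (cop positions, robber position, cops_to_move) *)
Definition cstate (k : nat) : Type := ({ffun 'I_k -> T} * T * bool)%type.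

Definition ccapture (k : nat) (s : cstate k) : Prop :=
  exists i : 'I_k, s.1.1 i = s.1.2.

Definition cop_hist_strategy (k : nat) : Type :=
  seq (cstate k) -> cstate k -> {ffun 'I_k -> T}.

Definition cop_hist_strategy_legal (k : nat) (sg : cop_hist_strategy k) : Prop :=
  forall h (s : cstate k) (i : 'I_k), closed_nbhd e (s.1.1 i) (sg h s i).

Definition classical_play (k : nat) (sg : cop_hist_strategy k)
    (p : nat -> cstate k) : Prop :=
  forall t : nat,
    if (p t).2 then
      p t.+1 = (sg [seq p i | i <- iota 0 t] (p t), (p t).1.2, false)
    else
      exists r' : T, closed_nbhd e (p t).1.2 r' /\
                     p t.+1 = ((p t).1.1, r', true).

Definition cop_win (k : nat) : Prop :=
  exists c0 : {ffun 'I_k -> T}, forall r0 : T,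
    exists sg : cop_hist_strategy k, cop_hist_strategy_legal sg /\
      forall p : nat -> cstate k, p 0 = (c0, r0, true) ->
        classical_play sg p -> exists t, ccapture (p t).

(* c(G) > m, with c(G) = min { k >= 1 | k cops win } *)
Definition cop_number_gt (m : nat) : Prop :=
  forall k, 1 <= k <= m -> ~ cop_win k.

End Classical.

(* The N-token game, N = n.+1: tokens 'I_n.+1, cops C_1..C_{N-1} are the     *)
(* tokens of value 0..n-1, the robber R is ord_max (value n = N-1).          *)
(* Move order C_1, ..., C_{N-1}, R, C_1, ...                                 *)

Section Game.
Variables (T : finType) (e : rel T) (n : nat).

Definition token : Type := 'I_n.+1.
Definition robber : token := ord_max.
Definition is_cop (i : token) : bool := i != robber.

(* a state: positions of the N tokens and the token to move *)
Definition state : Type := ({ffun 'I_n.+1 -> T} * 'I_n.+1)%type.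

Definition capture (s : state) : bool :=
  [exists i : 'I_n.+1, is_cop i && (s.1 i == s.1 robber)].

Definition next_tok (i : token) : token := inord (i.+1 %% n.+1).

Definition move (s : state) (y : T) : state :=
  ([ffun j => if j == s.2 then y else s.1 j], next_tok s.2).

(* joint (history-dependent) strategy of a coalition of cops:
   history of previous states, current state |-> vertex for the mover *)
Definition coal_strategy : Type := seq state -> state -> T.

Definition coal_strategy_legal (A : {set token}) (sg : coal_strategy) : Prop :=
  forall h (s : state), s.2 \in A -> closed_nbhd e (s.1 s.2) (sg h s).

Definition coal_play (A : {set token}) (sg : coal_strategy)
    (s : state) (p : nat -> state) : Prop :=
  p 0 = s /\
  forall t : nat, exists y : T,
    closed_nbhd e ((p t).1 (p t).2) y /\ p t.+1 = move (p t) y /\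
    ((p t).2 \in A -> y = sg [seq p i | i <- iota 0 t] (p t)).

Definition k_cops_guarantee (s : state) (k : nat) : Prop :=
  exists A : {set token}, (forall i, i \in A -> is_cop i) /\ #|A| = k /\
    exists sg : coal_strategy, coal_strategy_legal A sg /\
      forall p, coal_play A sg s p -> exists t, capture (p t).

Definition scn_is (s : state) (k : nat) : Prop :=
  1 <= k <= n /\ k_cops_guarantee s k /\
  forall j, 1 <= j < k -> ~ k_cops_guarantee s j.

Definition scn_inf (s : state) : Prop :=
  forall k, 1 <= k <= n -> ~ k_cops_guarantee s k.

(* pure positional strategy of token i (only its values on states with i to
   move are relevant) *)
Definition pos_strategy (i : token) (sg : state -> T) : Prop :=
  forall s : state, s.2 = i -> closed_nbhd e (s.1 i) (sg s).

Definition profile : Type := token -> state -> T.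

Definition profile_ok (sg : profile) : Prop := forall i, pos_strategy i (sg i).

Definition run (sg : profile) (s : state) (t : nat) : state :=
  iter t (fun s' : state => move s' (sg s'.2 s')) s.

Definition robber_payoff (gamma : R) (sg : profile) (s : state) : R :=
  match excluded_middle_informative
          (exists t : nat, capture (run sg s t)) with
  | left H => Ropp (pow gamma (@ex_minn (fun t => capture (run sg s t)) H))
  | right _ => R0
  end.

Definition replace (sg : profile) (A : pred token) (sg' : profile) : profile :=
  fun i => if A i then sg' i else sg i.

(* optimal (saddle point) profile of the two-player zero-sum CR game
   (cop player = all cops, robber player = R), from every initial state *)
Definition CR_optimal (gamma : R) (sg : profile) : Prop :=
  profile_ok sg /\
  forall s : state,
    (forall sr : profile, pos_strategy robber (sr robber) ->
       Rle (robber_payoff gamma (replace sg (pred1 robber) sr) s)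
           (robber_payoff gamma sg s)) /\
    (forall sc : profile, (forall i, is_cop i -> pos_strategy i (sc i)) ->
       Rle (robber_payoff gamma sg s)
           (robber_payoff gamma (replace sg is_cop sc) s)).

Definition CR_opt_component (gamma : R) (m : token) (tau : state -> T) : Prop :=
  exists sg : profile, CR_optimal gamma sg /\ sg m = tau.

Definition first_capture (sg : profile) (s : state) (t : nat) : bool :=
  capture (run sg s t) && [forall t' : 'I_t, ~~ capture (run sg s t')].

Definition leads_to_capture (sg : profile) (s : state) : Prop :=
  exists t, capture (run sg s t).

Definition capture_effected_by (sg : profile) (s : state) (m : token) : Prop :=
  is_cop m /\
  exists t, first_capture sg s t.+1 /\ (run sg s t).2 = m /\
            (run sg s t.+1).1 m = (run sg s t.+1).1 robber.

Definition hatC (gamma : R) (s : state) (m : token) : Prop :=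
  (exists sg, CR_optimal gamma sg /\ leads_to_capture sg s) /\
  forall sg, CR_optimal gamma sg -> leads_to_capture sg s ->
    capture_effected_by sg s m.

Definition sure_capture (gamma : R) (s : state) : Prop :=
  exists m : token, hatC gamma s m /\
    forall tau, CR_opt_component gamma m tau ->
    forall sg : profile, (forall i, i != m -> pos_strategy i (sg i)) ->
      let sg' := replace sg (pred1 m) (fun _ => tau) in
      exists t, first_capture sg' s t /\
                (run sg' s t).1 m = (run sg' s t).1 robber.

Definition noncapture (s : state) : bool := ~~ capture s.
Definition robber_to_move (s : state) : bool := s.2 == robber.

Definition in_G : Prop := cop_number_gt e n.

Definition in_G1 : Prop :=
  in_G /\ exists s : state, noncapture s /\ exists k, 2 <= k <= n /\ scn_is s k.

Definition in_G1' : Prop := in_G /\ ~ in_G1.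

Definition in_G2 : Prop :=
  in_G /\ forall s : state, robber_to_move s -> noncapture s -> scn_inf s.

Definition in_G2' : Prop := in_G1' /\ ~ in_G2.

Definition in_G3 (gamma : R) : Prop :=
  in_G2' /\ forall s : state, noncapture s -> scn_is s 1 -> sure_capture gamma s.

End Game.

(* Main.v *)
Require Import Defs.
From Stdlib Require Import Reals Classical.
From mathcomp Require Import all_boot zify.
Set Implicit Arguments. Unset Strict Implicit. Unset Printing Implicit Defensive.


Lemma move_pos (T : finType) (n : nat) (s : state T n) y j :
  (move s y).1 j = if j == s.2 then y else s.1 j.
Proof. by rewrite /move /= ffunE. Qed.

Lemma move_tok (T : finType) (n : nat) (s : state T n) y :
  (move s y).2 = next_tok s.2.
Proof. by []. Qed.

Lemma next_tok_val (n : nat) (i : token n) : (i : nat) < n -> (next_tok i : nat) = i.+1.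
Proof. move=> H; rewrite /next_tok inordK modn_small //; by rewrite ltnS. Qed.

Lemma next_tok_rob (n : nat) : (next_tok (robber n) : nat) = 0.
Proof. by rewrite /next_tok /robber /= modnn inordK. Qed.

Lemma rob_val (n : nat) : (robber n : nat) = n.
Proof. by []. Qed.

Lemma is_copE (n : nat) (i : token n) : is_cop i = ((i : nat) < n).
Proof.
rewrite /is_cop ltn_neqAle -ltnS ltn_ord andbT; congr negb.
Qed.

Lemma closed_refl (T : finType) (e : rel T) x : closed_nbhd e x x.
Proof. by rewrite /closed_nbhd eqxx. Qed.

Definition stepped (T : finType) (n : nat) (p : nat -> state T n) :=
  forall t, exists y, p t.+1 = move (p t) y.

Lemma adv (T : finType) (n : nat) (p : nat -> state T n) : stepped p ->
  forall t d i, (forall d', d' < d -> (p (t + d')).2 != i) -> (p (t + d)).1 i = (p t).1 i.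
Proof.
move=> Hp t; elim=> [|d IH] i H; first by rewrite addn0.
rewrite addnS; have [y ->] := Hp (t + d).
rewrite move_pos; have := H d (ltnSn d); rewrite eq_sym => /negbTE ->.
apply: IH => d' Hd'; apply: H; exact: ltnW.
Qed.

Lemma adv_tok (T : finType) (n : nat) (p : nat -> state T n) : stepped p ->
  forall t d, ((p t).2 : nat) + d <= n -> ((p (t + d)).2 : nat) = (p t).2 + d.
Proof.
move=> Hp t; elim=> [|d IH] H; first by rewrite !addn0.
rewrite addnS; have [y ->] := Hp (t + d).
have Hd : ((p t).2 : nat) + d <= n by apply: ltnW; rewrite -addnS.
rewrite move_tok next_tok_val IH ?addnS //. by rewrite -addnS.
Qed.


Lemma GL (T : finType) (e : rel T) (n : nat) (s : state T n) (z w : T) :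
  0 < n -> s.2 = robber n -> ~~ capture s -> s.1 (robber n) = z -> s.1 ord0 = w ->
  closed_nbhd e w z ->
  (forall y, closed_nbhd e z y ->
     (exists2 i, is_cop i & s.1 i = y) \/ closed_nbhd e w y \/ (forall x, e y x -> x = z)) ->
  k_cops_guarantee e s 1.
Proof.
move=> n0 Hs2 Hnc Hz Hw Hwz Hcov.
have cop0 : is_cop (ord0 : token n) by rewrite is_copE.
have r0 : (ord0 : token n) != robber n by [].
exists [set ord0]; split; first by move=> i; rewrite inE => /eqP ->.
split; first by rewrite cards1.
pose sg : coal_strategy T n := fun h st =>
  if closed_nbhd e (st.1 ord0) (st.1 (robber n)) then st.1 (robber n)
  else if closed_nbhd e (st.1 ord0) z then z else st.1 ord0.
exists sg; split.
  move=> h st; rewrite inE => /eqP ->; rewrite /sg.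
  by case: ifP => // _; case: ifP => // _; exact: closed_refl.
move=> p [p0 Hp].
have Hst : stepped p by move=> t; have [y [_ [H _]]] := Hp t; exists y.
have [y1 [Hl1 [E1 _]]] := Hp 0.
rewrite p0 Hs2 Hz in Hl1; rewrite p0 in E1.
have P1r : (p 1).1 (robber n) = y1 by rewrite E1 move_pos Hs2 eqxx.
have P1o : forall i, i != robber n -> (p 1).1 i = s.1 i.
  by move=> i Hi; rewrite E1 move_pos Hs2 (negbTE Hi).
have T1 : (p 1).2 = ord0 by apply: ord_inj; rewrite E1 move_tok Hs2 next_tok_rob.
have [y2 [_ [E2 Hsg2]]] := Hp 1.
have Y2 : y2 = sg [seq p i | i <- iota 0 1] (p 1) by apply: Hsg2; rewrite T1 inE.
have P1_0 : (p 1).1 ord0 = w by rewrite P1o.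
have P2_0 : (p 2).1 ord0 = y2 by rewrite E2 move_pos T1 eqxx.
have P2r : (p 2).1 (robber n) = y1 by rewrite E2 move_pos T1 eq_sym (negbTE r0) P1r.
case Hb: (closed_nbhd e w y1).
  exists 2; apply/existsP; exists ord0.
  by rewrite cop0 P2_0 P2r Y2 /sg P1_0 P1r Hb eqxx.
case: (Hcov y1 Hl1) => [[i Hi Hiy]|[Hc|Hleaf]]; [|by rewrite Hb in Hc|].
  exists 1; apply/existsP; exists i; by rewrite Hi (P1o i Hi) Hiy P1r eqxx.
have Y2z : y2 = z by rewrite Y2 /sg P1_0 P1r Hb Hwz.
have T2 : ((p 2).2 : nat) = 1 by rewrite E2 move_tok T1 next_tok_val.
have Htok : forall d', d' < n.-1 -> ((p (2 + d')).2 : nat) = 1 + d'.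
  move=> d' Hd'; rewrite adv_tok // T2 //; lia.
have Hpos : forall i : token n, ((i : nat) = 0 \/ i = robber n) ->
    (p (2 + n.-1)).1 i = (p 2).1 i.
  move=> i Hi; apply: (adv Hst) => d' Hd'; apply/negP => /eqP Ei.
  have := Htok d' Hd'; rewrite Ei; case: Hi => [->|->]; rewrite ?rob_val; lia.
have TK : (p (2 + n.-1)).2 = robber n.
  apply: ord_inj; rewrite (adv_tok Hst) T2 ?rob_val; lia.
have PK0 : (p (2 + n.-1)).1 ord0 = z by rewrite Hpos ?P2_0 //; left.
have PKr : (p (2 + n.-1)).1 (robber n) = y1 by rewrite Hpos ?P2r //; right.
have [y3 [Hl3 [E3 _]]] := Hp (2 + n.-1).
rewrite TK PKr in Hl3.
have TK1 : (p (2 + n.-1).+1).2 = ord0 by apply: ord_inj; rewrite E3 move_tok TK next_tok_rob.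
have PK1_0 : (p (2 + n.-1).+1).1 ord0 = z by rewrite E3 move_pos TK (negbTE r0) PK0.
have PK1r : (p (2 + n.-1).+1).1 (robber n) = y3 by rewrite E3 move_pos TK eqxx.
move: Hl3; rewrite /closed_nbhd => /orP [/eqP Hy3 | Hey].
  rewrite -Hy3 in PK1r.
  have [y4 [_ [E4 Hsg4]]] := Hp (2 + n.-1).+1.
  have Y4 : y4 = y1 by rewrite Hsg4 ?TK1 ?inE // /sg PK1_0 PK1r Hl1.
  exists (2 + n.-1).+2; apply/existsP; exists ord0.
  have r0' : (robber n == ord0) = false by rewrite eq_sym (negbTE r0).
  by rewrite cop0 E4 !move_pos TK1 eqxx r0' Y4 PK1r eqxx.
exists (2 + n.-1).+1; apply/existsP; exists ord0.
by rewrite cop0 PK1_0 PK1r (Hleaf _ Hey) eqxx.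
Qed.


Lemma RL (T : finType) (e : rel T) (n : nat) (gamma : R) (s : state T n) :
  0 < n -> in_G3 e n gamma -> s.2 = robber n -> ~~ capture s -> k_cops_guarantee e s 1 ->
  forall x1 x2, x1 != x2 -> closed_nbhd e (s.1 (robber n)) x1 ->
  closed_nbhd e (s.1 (robber n)) x2 ->
  (exists2 i, is_cop i & s.1 i = x1) -> (exists2 j, is_cop j & s.1 j = x2) -> False.
Proof.
move=> n0 [_ HG3] Hs2 Hnc Hg x1 x2 Hx12 Hc1 Hc2 Ho1 Ho2.
have Hscn : scn_is e s 1 by split; [rewrite n0|split=> // j /andP [] /leq_trans H/H].
have [m [[[sg0 [Hopt Hlead]] Hall] Hsure]] := HG3 s Hnc Hscn.
have [Hcm _] := Hall sg0 Hopt Hlead.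
have Htau : CR_opt_component e gamma m (sg0 m) by exists sg0.
pose x := if s.1 m == x1 then x2 else x1.
have Hxm : s.1 m != x by rewrite /x; case E: (s.1 m == x1); [rewrite (eqP E)|rewrite E].
have Hx : closed_nbhd e (s.1 (robber n)) x by rewrite /x; case: ifP.
have [c Hc Hcx] : exists2 c, is_cop c & s.1 c = x by rewrite /x; case: ifP.
pose sgp : profile T n := fun i st => if i == robber n then
  (if closed_nbhd e (st.1 (robber n)) x then x else st.1 (robber n)) else st.1 i.
have Hpos : forall i, i != m -> pos_strategy e i (sgp i).
  move=> i _ st _; rewrite /sgp; case: eqP => [->|_]; last exact: closed_refl.
  by case: ifP => // _; exact: closed_refl.
have := Hsure (sg0 m) Htau sgp Hpos => /= [[t [Hfc Hm]]].
set sg' := replace _ _ _ in Hfc Hm.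
have rm : (robber n == m) = false by apply/negbTE; rewrite eq_sym.
have R1 : run sg' s 1 = move s x.
  by rewrite /run /= /sg' /replace /= Hs2 rm /sgp eqxx Hx.
have Cap1 : capture (run sg' s 1).
  apply/existsP; exists c; rewrite Hc R1 !move_pos Hs2 eqxx.
  have Hc' : (c == robber n) = false by apply/negbTE; exact: Hc.
  by rewrite Hc' Hcx eqxx.
move: Hfc; rewrite /first_capture => /andP [Hct /forallP Hbef].
case: t Hct Hbef Hm => [|[|t]] Hct Hbef Hm.
- by rewrite /run /= (negbTE Hnc) in Hct.
- move: Hm; rewrite R1 !move_pos Hs2 eqxx.
  have -> : (m == robber n) = false by apply/negbTE.
  by move/eqP; rewrite (negbTE Hxm).
- by have := Hbef (Ordinal (isT : 1 < t.+2)); rewrite Cap1.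
Qed.

Lemma MR (T : finType) (e : rel T) (n : nat) (gamma : R) (s : state T n) :
  in_G3 e n gamma -> ~~ capture s -> forall k, 1 <= k <= n ->
  k_cops_guarantee e s k -> k_cops_guarantee e s 1.
Proof.
move=> [[[HG HnG1] _] _] Hnc k; elim/ltn_ind: k => k IH /andP [k1 kn] Hg.
case: (classic (exists j, 1 <= j < k /\ k_cops_guarantee e s j)) => [[j [/andP [j1 jk] Hj]]|Hno].
  apply: (IH j jk) => //; rewrite j1 /=; exact: ltnW (leq_trans jk kn).
case: (ltngtP k 1) => [|Hk|Hk]; first by rewrite ltnNge k1.
  exfalso; apply: HnG1; split=> //; exists s; split=> //; exists k; split; first by rewrite Hk.
  split; first by rewrite k1.
  split=> // j Hj Hgj; apply: Hno; by exists j.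
by rewrite -Hk.
Qed.


Definition cond (T : finType) (e : rel T) (n : nat) (m : token n) (st : state T n) (y : T) : bool :=
  [&& closed_nbhd e (st.1 (robber n)) y, ~~ leaf e y,
      [forall i, is_cop i ==> (st.1 i != y)] & ~~ closed_nbhd e (st.1 m) y].

Lemma card1_eq (T : finType) (A : {set T}) a b : #|A| == 1 -> a \in A -> b \in A -> a = b.
Proof. by move/cards1P => [c ->]; rewrite !inE => /eqP -> /eqP ->. Qed.

Lemma cardn1_ex (T : finType) (A : {set T}) a : #|A| != 1 -> a \in A -> exists2 b, b \in A & b != a.
Proof.
move=> H Ha; apply: NNPP => Hn; move/negP: H; apply; apply/eqP.
have -> : A = [set a]; last by rewrite cards1.
apply/setP => b; rewrite inE; apply/idP/eqP => [Hb|->] //.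
by apply: NNPP => Hba; apply: Hn; exists b => //; apply/eqP.
Qed.

Lemma stuck_false (T : finType) (e : rel T) (n : nat) (gamma : R) (m : token n) (st : state T n) :
  1 < n -> symmetric e -> irreflexive e -> in_G3 e n gamma -> is_cop m ->
  st.2 = robber n -> ~~ capture st -> ~~ leaf e (st.1 (robber n)) ->
  (forall y, ~~ cond e m st y) -> False.
Proof.
move=> n1 Hsym Hirr HG3 Hm Hs2 Hnc Hnlz Hst.
have n0 : 0 < n by apply: ltnW.
set z := st.1 (robber n) in Hnlz Hst *.
set w := st.1 m in Hst *.
have Hcov : forall y, closed_nbhd e z y -> ~~ leaf e y ->
    (exists2 i, is_cop i & st.1 i = y) \/ closed_nbhd e w y.
  move=> y Hzy Hnl; move: (Hst y); rewrite /cond Hzy Hnl /= negb_and negbK.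
  case/orP => [/forallPn [i]|->]; last by right.
  by rewrite negb_imply negbK => /andP [Hi /eqP Hiy]; left; exists i.
have Hnocap : forall i, is_cop i -> st.1 i != z.
  move=> i Hi; apply/negP => /eqP Hiz; move/negP: Hnc; apply; apply/existsP; exists i.
  by rewrite Hi Hiz eqxx.
have Hwz : closed_nbhd e w z.
  case: (Hcov z (closed_refl _ _) Hnlz) => // [[i Hi Hiz]].
  by move: (Hnocap i Hi); rewrite Hiz eqxx.
have Hwnz : w != z by apply: Hnocap.
have Hewz : e w z by move: Hwz; rewrite /closed_nbhd (negbTE Hwnz).
have Hezw : e z w by rewrite Hsym.
have Hleafish : forall y, closed_nbhd e z y -> leaf e y -> forall x, e y x -> x = z.
  move=> y Hzy Hly x Hyx.
  have Hyz : y != z by apply/negP => /eqP Eyz; move: Hly; rewrite Eyz (negbTE Hnlz).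
  have Heyz : e y z by move: Hzy; rewrite /closed_nbhd eq_sym (negbTE Hyz) /= Hsym.
  by apply: (card1_eq Hly); rewrite inE.
have Hfull : forall y, closed_nbhd e z y ->
    (exists2 i, is_cop i & st.1 i = y) \/ closed_nbhd e w y \/ (forall x, e y x -> x = z).
  move=> y Hzy; case Hly: (leaf e y); first by right; right; apply: Hleafish.
  by case: (Hcov y Hzy (negbT Hly)) => H; [left|right; left].
have cop0 : is_cop (ord0 : token n) by rewrite is_copE.
case: (classic (exists2 i, is_cop i & closed_nbhd e z (st.1 i) && (st.1 i != w))).
  move=> [i0 Hi0 /andP [Hzi0 Hi0w]].
  pose sig := fun i : token n => if i == ord0 then m else if i == m then ord0 else i.
  have sigK : forall i, sig (sig i) = i.
    move=> i; rewrite /sig; case: (eqVneq i ord0) => [->|H0].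
      by rewrite eqxx; case: eqVneq.
    case: (eqVneq i m) => [->|Hm0]; first by rewrite eqxx.
    by rewrite (negbTE H0) (negbTE Hm0).
  have sigcop : forall i, is_cop i -> is_cop (sig i).
    by move=> i Hi; rewrite /sig; case: ifP => _ //; case: ifP.
  have sigr : sig (robber n) = robber n.
    rewrite /sig; have -> : (robber n == ord0) = false by rewrite eq_sym; apply/negbTE.
    by have -> : (robber n == m) = false by rewrite eq_sym; apply/negbTE.
  pose s' : state T n := ([ffun i => st.1 (sig i)], st.2).
  have Ps' : forall i, s'.1 i = st.1 (sig i) by move=> i; rewrite ffunE.
  have Occ : forall y, (exists2 c, is_cop c & st.1 c = y) -> (exists2 c, is_cop c & s'.1 c = y).
    by move=> y [c Hc Hcy]; exists (sig c); [apply: sigcop|rewrite Ps' sigK].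
  have Hs'r : s'.1 (robber n) = z by rewrite Ps' sigr.
  have Hnc' : ~~ capture s'.
    apply/negP => /existsP [c /andP [Hc /eqP Hcz]].
    move: (Hnocap _ (sigcop c Hc)); by rewrite -Ps' Hcz Hs'r eqxx.
  have Hg : k_cops_guarantee e s' 1.
    apply: (@GL _ _ _ s' z w n0 Hs2 Hnc' Hs'r _ Hwz); first by rewrite Ps' /sig eqxx.
    move=> y Hzy; case: (Hfull y Hzy) => [H|H]; [left; exact: Occ|by right].
  apply: (@RL _ _ _ gamma s' n0 HG3 Hs2 Hnc' Hg w (st.1 i0)).
  - by rewrite eq_sym.
  - by rewrite Hs'r /closed_nbhd Hezw orbT.
  - by rewrite Hs'r.
  - by exists ord0; rewrite // Ps' /sig eqxx.
  - by apply: Occ; exists i0.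
move=> Hcase.
have Hcase' : forall i, is_cop i -> closed_nbhd e z (st.1 i) -> st.1 i = w.
  move=> i Hi Hzi; apply/eqP; apply: NNPP => Hne; apply: Hcase; exists i => //.
  by rewrite Hzi; apply/negP.
have Hwin : w \in [set v | e z v] by rewrite inE.
have [y' Hy' Hy'w] := cardn1_ex Hnlz Hwin.
rewrite inE in Hy'.
have Hy'z : y' != z by apply/negP => /eqP E; move: Hy'; rewrite E Hirr.
pose cop1 : token n := inord 1.
have cop1v : (cop1 : nat) = 1 by rewrite inordK // ltnS ltnW.
have cop1c : is_cop cop1 by rewrite is_copE cop1v.
have c10 : (ord0 == cop1) = false by apply/negbTE/eqP => /(congr1 val) /=; rewrite cop1v.
have r0 : (ord0 == robber n) = false by apply/negbTE.
pose s'' : state T n := ([ffun i => if i == robber n then z else if i == cop1 then y' else w], robber n).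
have Ps'' : forall i, s''.1 i = if i == robber n then z else if i == cop1 then y' else w.
  by move=> i; rewrite ffunE.
have Hs''r : s''.1 (robber n) = z by rewrite Ps'' eqxx.
have Hnc'' : ~~ capture s''.
  apply/negP => /existsP [c /andP [Hc /eqP Hcz]].
  move: Hcz; rewrite Hs''r Ps'' (negbTE Hc); case: ifP => _ /eqP.
    by rewrite (negbTE Hy'z).
  by rewrite (negbTE Hwnz).
have Hg : k_cops_guarantee e s'' 1.
  apply: (@GL _ _ _ s'' z w n0 (erefl _) Hnc'' Hs''r _ Hwz); first by rewrite Ps'' r0 c10.
  move=> y Hzy; case: (Hfull y Hzy) => [[i Hi Hiy]|H]; last by right.
  by right; left; rewrite -Hiy (Hcase' i Hi) ?Hiy // closed_refl.
apply: (@RL _ _ _ gamma s'' n0 HG3 (erefl _) Hnc'' Hg w y').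
- by rewrite eq_sym.
- by rewrite Hs''r /closed_nbhd Hezw orbT.
- by rewrite Hs''r /closed_nbhd Hy' orbT.
- by exists ord0; rewrite // Ps'' r0 c10.
- exists cop1 => //; rewrite Ps''; have -> : (cop1 == robber n) = false by apply/negbTE.
  by rewrite eqxx.
Qed.


Definition rch (T : finType) (e : rel T) (n : nat) (m : token n) (st : state T n) : T :=
  match [pick y | cond e m st y] with Some y => y | None => st.1 (robber n) end.

Definition chf (T : finType) (e : rel T) (n : nat) (m : token n) (sg : coal_strategy T n)
  (h : seq (state T n)) (st : state T n) : T :=
  if st.2 == m then sg h st else if st.2 == robber n then rch e m st else st.1 st.2.

Fixpoint hp (T : finType) (n : nat) (c : seq (state T n) -> state T n -> T) (s : state T n)
  (t : nat) : seq (state T n) * state T n :=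
  match t with
  | 0 => ([::], s)
  | t'.+1 => let hs := hp c s t' in (rcons hs.1 hs.2, move hs.2 (c hs.1 hs.2))
  end.

Definition pl (T : finType) (n : nat) c (s : state T n) t := (hp c s t).2.

Lemma hp1 (T : finType) (n : nat) c (s : state T n) t :
  (hp c s t).1 = [seq pl c s i | i <- iota 0 t].
Proof.
elim: t => [//|t IH].
have -> : [seq pl c s i | i <- iota 0 t.+1] = rcons [seq pl c s i | i <- iota 0 t] (pl c s t).
  by rewrite -addn1 iotaD map_cat cats1.
by rewrite /= IH.
Qed.

Lemma plS (T : finType) (n : nat) c (s : state T n) t :
  pl c s t.+1 = move (pl c s t) (c [seq pl c s i | i <- iota 0 t] (pl c s t)).
Proof. by rewrite /pl /= -hp1. Qed.

Lemma nonleaf_inf (T : finType) (e : rel T) (n : nat) (gamma : R) (s : state T n) :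
  1 < n -> symmetric e -> irreflexive e -> in_G3 e n gamma ->
  s.2 = robber n -> ~~ capture s -> ~~ leaf e (s.1 (robber n)) -> scn_inf e s.
Proof.
move=> n1 Hsym Hirr HG3 Hs2 Hnc Hnl k Hk Hg.
have [A [HA [cardA [sg [Hleg Hwin]]]]] := MR HG3 Hnc Hk Hg.
have /cards1P [m Am] : #|A| == 1 by rewrite cardA.
 rewrite Am in HA Hleg Hwin.
have Hm : is_cop m by apply: HA; rewrite inE.
pose c := chf e m sg.
pose p := pl c s.
have Hleg_c : forall h (st : state T n), closed_nbhd e (st.1 st.2) (c h st).
  move=> h st; rewrite /c /chf; case: eqP => [E|_].
    by apply: Hleg; rewrite E inE.
  case: eqP => [E|_]; last exact: closed_refl.
  rewrite /rch; case: pickP => [y|_]; last by rewrite E closed_refl.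
  by rewrite E => /and4P [].
have Hplay : coal_play e [set m] sg s p.
  split; first by [].
  move=> t; exists (c [seq p i | i <- iota 0 t] (p t)); split; first exact: Hleg_c.
  split; first exact: plS.
  by rewrite inE /c /chf => ->.
have [t0 Hcap] := Hwin p Hplay.
have Hpl : forall t, p t.+1 = move (p t) (c [seq p i | i <- iota 0 t] (p t)) by move=> t; exact: plS.
have rm : (robber n == m) = false by apply/negbTE; rewrite eq_sym.
have mr : (m == robber n) = false by apply/negbTE.
suff Hall : forall k, [/\ (p (k * n.+1)).2 = robber n, ~~ leaf e ((p (k * n.+1)).1 (robber n))
   & forall t, t <= k * n.+1 -> ~~ capture (p t)].
  have [_ _ H] := Hall t0; have Ht0 : t0 <= t0 * n.+1 by rewrite mulnS leq_addr.
  by move: (H t0 Ht0); rewrite Hcap.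
elim=> [|kk [HT Hnlk Hnck]].
  rewrite mul0n; split=> // t; by rewrite leqn0 => /eqP ->.
set T0 := kk * n.+1 in HT Hnlk Hnck *.
case Hex: [exists y, cond e m (p T0) y]; last first.
  exfalso; apply: (stuck_false n1 Hsym Hirr HG3 Hm HT (Hnck T0 (leqnn _)) Hnlk) => y.
  by move/negbT/existsPn: Hex.
have [y0 Hry Hc0] : exists2 y0, rch e m (p T0) = y0 & cond e m (p T0) y0.
  rewrite /rch; case: pickP => [y Hy|H]; first by exists y.
  by move/existsP: Hex => [y]; rewrite H.
move: (Hc0) => /and4P [Hc1 Hc2 /forallP Hc3 Hc4].
set w := (p T0).1 m in Hc4.
have Inv : forall j, 0 < j <= n.+1 -> [/\ ((p (T0 + j)).2 : nat) = j.-1,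
   (p (T0 + j)).1 (robber n) = y0,
   (forall i, i != m -> is_cop i -> (p (T0 + j)).1 i = (p T0).1 i),
   closed_nbhd e w ((p (T0 + j)).1 m) & (j.-1 <= m -> (p (T0 + j)).1 m = w)].
  elim=> [//|j IH] /andP [_ Hj].
  case: j IH Hj => [_ _|j IH Hj].
    rewrite addn1 Hpl.
    have -> : c [seq p i | i <- iota 0 T0] (p T0) = y0 by rewrite /c /chf HT rm eqxx Hry.
    split.
    - by rewrite move_tok HT next_tok_rob.
    - by rewrite move_pos HT eqxx.
    - by move=> i _ Hi; rewrite move_pos HT (negbTE Hi).
    - by rewrite move_pos HT mr closed_refl.
    - by rewrite move_pos HT mr.
  have [Ht Hr Ho Hmc Hmw] := IH (ltnW Hj).
  rewrite addnS Hpl.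
  set st := p (T0 + j.+1) in Ht Hr Ho Hmc Hmw *.
  have jn : j < n by rewrite -ltnS.
  have Hst_r : (st.2 == robber n) = false.
    by apply/negbTE/eqP => E; move: Ht jn; rewrite E rob_val /= => ->; rewrite ltnn.
  have Htok : ((move st (c [seq p i | i <- iota 0 (T0 + j.+1)] st)).2 : nat) = j.+1.
    by rewrite move_tok next_tok_val Ht.
  case: (eqVneq st.2 m) => Emv.
    have Hy := Hleg_c [seq p i | i <- iota 0 (T0 + j.+1)] st.
    rewrite Emv Hmw in Hy; last by rewrite -Emv Ht.
    split=> //.
    - by rewrite move_pos eq_sym Hst_r.
    - by move=> i Hi Hci; rewrite move_pos Emv (negbTE Hi) Ho.
    - by rewrite move_pos Emv eqxx.
    - by move=> /= Hjm; exfalso; move: Hjm; rewrite -Emv Ht /= ltnn.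
  have -> : c [seq p i | i <- iota 0 (T0 + j.+1)] st = st.1 st.2.
    by rewrite /c /chf (negbTE Emv) Hst_r.
  have Hms : (move st (st.1 st.2)).1 = st.1.
    by apply/ffunP => i; rewrite move_pos; case: eqP => [->|].
  split; first by rewrite /= next_tok_val Ht.
  - by rewrite Hms.
  - by move=> i Hi Hci; rewrite Hms Ho.
  - by rewrite Hms.
  - by move=> Hjm; rewrite Hms Hmw // ltnW.
have Hncj : forall j, 0 < j <= n.+1 -> ~~ capture (p (T0 + j)).
  move=> j Hj; have [_ Hr Ho Hmc _] := Inv j Hj.
  apply/negP => /existsP [i /andP [Hi /eqP Hiy]]; rewrite Hr in Hiy.
  case: (eqVneq i m) => [Eim|Him].
    by move: Hc4; rewrite -Hiy Eim Hmc.
  by move: (Hc3 i); rewrite Hi /= -(Ho i Him Hi) Hiy eqxx.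
have [Ht Hr _ _ _] := Inv n.+1 (leqnn _).
split.
- by rewrite mulSn addnC; apply: ord_inj; rewrite Ht.
- by rewrite mulSn addnC Hr.
- move=> t; rewrite mulSn addnC => Ht'; case: (leqP t T0) => Htk; first exact: Hnck.
  have -> : t = T0 + (t - T0) by rewrite subnKC // ltnW.
  by apply: Hncj; rewrite subn_gt0 Htk /= leq_subLR.
Qed.


Theorem mainTheorem15 (T : finType) (e : rel T) (n : nat) (gamma : R) :
  Rlt R0 gamma -> Rlt gamma R1 ->
  simple_connected_graph e ->
  3 <= n.+1 ->
  in_G3 e n gamma ->
  forall u : T,
    ~~ leaf e u <->
    (forall s : state T n,
       robber_to_move s -> noncapture s -> s.1 (robber n) = u -> scn_inf e s).
Proof.
move=> _ _ [Hsym [Hirr _]] Hn HG3 u.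
have n1 : 1 < n by [].
have n0 : 0 < n by apply: ltnW.
split.
  move=> Hnl s /eqP Hs2 Hnc Hu; apply: (nonleaf_inf n1 Hsym Hirr HG3 Hs2 Hnc).
  by rewrite Hu.
move=> H; apply/negP => Hl.
have /cards1P [v Ev] := Hl.
have Huv : e u v.
  have : v \in [set x | e u x] by rewrite Ev inE.
  by rewrite inE.
have Hvu : e v u by rewrite Hsym.
have Hneq : v != u by apply/negP => /eqP E; move: Huv; rewrite E Hirr.
pose s : state T n := ([ffun i => if i == robber n then u else v], robber n).
have Ps : forall i, s.1 i = if i == robber n then u else v by move=> i; rewrite ffunE.
have Hsr : s.1 (robber n) = u by rewrite Ps eqxx.
have Hnc : ~~ capture s.
  apply/negP => /existsP [c /andP [Hc /eqP]]; rewrite Hsr Ps (negbTE Hc) => E.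
  by move: Hneq; rewrite E eqxx.
have Hg : k_cops_guarantee e s 1.
  have r0 : ((ord0 : token n) == robber n) = false.
    by apply/negbTE/eqP => /(congr1 val) /= E; move: n0; rewrite -[n]/(robber n : nat) -E ltnn.
  apply: (@GL _ _ _ s u v n0 (erefl _) Hnc Hsr); first by rewrite Ps r0.
    by rewrite /closed_nbhd Hvu orbT.
  move=> y; rewrite /closed_nbhd => /orP [/eqP <-|Huy].
    by right; left; rewrite /closed_nbhd Hvu orbT.
  have : y \in [set x | e u x] by rewrite inE.
  by rewrite Ev inE => /eqP ->; right; left; exact: closed_refl.
by apply: (H s (eqxx _) Hnc Hsr 1) => //; rewrite n0.
Qed.
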